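(* Let $U\subset\mathbb{R}^s$ be open, $X:U\to\mathbb{R}^{n+1}_1$ a spacelike embedding, $M=X(U)$, and $n^T$ a smooth future directed unit timelike normal field along $M$. The following are equivalent: (1) there is a smooth unit spacelike normal field $n^S$ along $M$ with $\langle n^S,n^T\rangle=0$ such that the normalized lightcone Gauss map $\widetilde{\mathbb{LG}}(n^T,n^S)$ is constant; (2) there exist $v\in\mathbb{S}^{n-1}_+$ and $c\in\mathbb{R}$ such that $M\subset HP(v,c)$. Moreover, if these conditions hold (with $n^S$ as in (1)), then $M$ is totally $(n^T,n^S)$-flat, i.e. the lightcone shape operator $S_p(n^T,n^S)$ vanishes at every $p\in M$.
   Context: $\mathbb{R}^{n+1}_1$ is $\mathbb{R}^{n+1}$ with $\langle x,y\rangle=-x_0y_0+\sum_{i=1}^n x_iy_i$. Spacelike embedding: tangent spaces consist of spacelike vectors. Normal fields take values in the pseudo-orthogonal complement $N_p(M)$ of $T_pM$. Future directed unit timelike: $\langle n^T,n^T\rangle=-1$, $n^T_0>0$; unit spacelike: $\langle n^S,n^S\rangle=1$. $\mathbb{S}^{n-1}_+=\{x:\langle x,x\rangle=0,\ x_0=1\}$; for nonzero lightlike $x$, $\widetilde x=x/x_0\in\mathbb{S}^{n-1}_+$. $\widetilde{\mathbb{LG}}(n^T,n^S)(u)=\widetilde{n^T(u)+n^S(u)}$. $HP(v,c)=\{x:\langle x,v\rangle=c\}$. With $\pi^\tau:T_pM\oplus N_p(M)\to T_pM$ the projection, $S_p(n^T,n^S)=-\pi^\tau\circ d_p(n^T+n^S)$.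 A point is $(n^T,n^S)$-umbilical if $S_p(n^T,n^S)$ is a scalar multiple of the identity, and $(n^T,n^S)$-flat if moreover $\det S_p(n^T,n^S)=0$ (equivalently $S_p(n^T,n^S)=0$). *)

(* Defs.v *)
From HB Require Import structures.
From mathcomp Require Import all_boot all_order all_algebra.
From mathcomp Require Import all_classical all_reals all_analysis.
Set Implicit Arguments. Unset Strict Implicit. Unset Printing Implicit Defensive.
Import Order.TTheory GRing.Theory Num.Theory.
Import numFieldNormedType.Exports.
Local Open Scope classical_set_scope.
Local Open Scope ring_scope.

(* Points of R^{n+1}_1 are row vectors 'rV[R]_(n.+1); coordinate x_0 is x 0 ord0.
   Points of R^s are row vectors 'rV[R]_s. *)

Definition lprod {R : realType} {n : nat} (x y : 'rV[R]_(n.+1)) : R :=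
  - (x 0 ord0 * y 0 ord0) + \sum_(i < n.+1 | i != ord0) x 0 i * y 0 i.

Fixpoint Ck_on {R : realType} {s : nat} {W : normedModType R}
    (k : nat) (U : set 'rV[R]_s) (f : 'rV[R]_s -> W) : Prop :=
  match k with
  | 0 => forall u, U u -> {for u, continuous f}
  | k'.+1 => (forall u, U u -> differentiable f u) /\
             (forall i : 'I_s, Ck_on k' U ('D_(delta_mx 0 i) f))
  end.

Definition smooth_on {R : realType} {s : nat} {W : normedModType R}
    (U : set 'rV[R]_s) (f : 'rV[R]_s -> W) : Prop :=
  forall k, Ck_on k U f.

Definition tangent_space {R : realType} {s n : nat}
    (X : 'rV[R]_s -> 'rV[R]_(n.+1)) (u : 'rV[R]_s) : set 'rV[R]_(n.+1) :=
  [set t | exists w, t = 'd X u w].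

Definition normal_space {R : realType} {s n : nat}
    (X : 'rV[R]_s -> 'rV[R]_(n.+1)) (u : 'rV[R]_s) : set 'rV[R]_(n.+1) :=
  [set y | forall t, tangent_space X u t -> lprod y t = 0].

Definition spacelike_embedding {R : realType} {s n : nat}
    (U : set 'rV[R]_s) (X : 'rV[R]_s -> 'rV[R]_(n.+1)) : Prop :=
  [/\ smooth_on U X,
      {in U &, injective X},
      (* the inverse X(U) -> U is continuous *)
      (forall u, U u -> forall e : R, 0 < e -> exists2 d : R, 0 < d &
          forall u', U u' -> `|X u' - X u| < d -> `|u' - u| < e) &
      (forall u, U u -> forall t, tangent_space X u t -> t != 0 -> 0 < lprod t t)].

Definition future_unit_timelike_normal {R : realType} {s n : nat}
    (U : set 'rV[R]_s) (X : 'rV[R]_s -> 'rV[R]_(n.+1))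
    (nT : 'rV[R]_s -> 'rV[R]_(n.+1)) : Prop :=
  smooth_on U nT /\
  forall u, U u -> [/\ normal_space X u (nT u), lprod (nT u) (nT u) = -1 &
                       0 < nT u 0 ord0].

Definition unit_spacelike_normal_orth {R : realType} {s n : nat}
    (U : set 'rV[R]_s) (X : 'rV[R]_s -> 'rV[R]_(n.+1))
    (nT nS : 'rV[R]_s -> 'rV[R]_(n.+1)) : Prop :=
  smooth_on U nS /\
  forall u, U u -> [/\ normal_space X u (nS u), lprod (nS u) (nS u) = 1 &
                       lprod (nS u) (nT u) = 0].

Definition lightcone_sphere {R : realType} {n : nat} : set 'rV[R]_(n.+1) :=
  [set x | lprod x x = 0 /\ x 0 ord0 = 1].

Definition normalize_lc {R : realType} {n : nat} (x : 'rV[R]_(n.+1)) : 'rV[R]_(n.+1) :=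
  (x 0 ord0)^-1 *: x.

Definition nLG {R : realType} {s n : nat} (nT nS : 'rV[R]_s -> 'rV[R]_(n.+1))
    (u : 'rV[R]_s) : 'rV[R]_(n.+1) := normalize_lc (nT u + nS u).

Definition HP {R : realType} {n : nat} (v : 'rV[R]_(n.+1)) (c : R) : set 'rV[R]_(n.+1) :=
  [set x | lprod x v = c].

Definition tangent_proj {R : realType} {s n : nat}
    (X : 'rV[R]_s -> 'rV[R]_(n.+1)) (u : 'rV[R]_s) (y : 'rV[R]_(n.+1)) : 'rV[R]_(n.+1) :=
  xget 0 [set t | tangent_space X u t /\ normal_space X u (y - t)].

Definition dX_inv {R : realType} {s n : nat}
    (X : 'rV[R]_s -> 'rV[R]_(n.+1)) (u : 'rV[R]_s) (xi : 'rV[R]_(n.+1)) : 'rV[R]_s :=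
  xget 0 [set w | 'd X u w = xi].

(* lightcone shape operator S_p(nT,nS) = - pi^tau o d_p(nT+nS) at p = X u,
   acting on xi in T_pM (d_p(nT+nS)(dX_u w) = d(nT+nS)_u(w)) *)
Definition lc_shape_operator {R : realType} {s n : nat}
    (X : 'rV[R]_s -> 'rV[R]_(n.+1)) (nT nS : 'rV[R]_s -> 'rV[R]_(n.+1))
    (u : 'rV[R]_s) (xi : 'rV[R]_(n.+1)) : 'rV[R]_(n.+1) :=
  - tangent_proj X u ('d (nT \+ nS) u (dX_inv X u xi)).

(* Main.v *)
Require Import Defs.
From HB Require Import structures.
From mathcomp Require Import all_boot all_order all_algebra.
From mathcomp Require Import all_classical all_reals all_analysis.
From mathcomp Require Import ring lra.
Import Order.TTheory GRing.Theory Num.Theory.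
Import numFieldNormedType.Exports.
Local Open Scope classical_set_scope.
Local Open Scope ring_scope.

Local Notation normal_space := Defs.normal_space.
Local Notation tangent_space := Defs.tangent_space.
Section Loc.
Context {R : realType} {V W : normedModType R}.

Lemma near0_differentiable (h : V -> W) (x : V) :
  (\forall y \near x, h y = 0) -> differentiable h x.
Proof.
move=> h0.
have hx : h x = 0 by exact: (nbhs_singleton h0).
have E : h \o shift x = cst (h x) + \0 +o_ 0 id.
  apply/eqaddoP => _ /posnumP[e].
  have : \forall y \near 0, h (y + x) = 0.
    move/nbhs_ballP: h0 => [r r0 hr]; apply/nbhs_ballP; exists r => // y.
    rewrite -ball_normE /= sub0r normrN => yr; apply: hr.
    by rewrite -ball_normE /= opprD addrCA subrr addr0 normrN.
  apply: filter_app; near=> y => hy.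
  by rewrite /= !fctE hy hx addr0 subr0 normr0 mulr_ge0.
have d0 : 'd h x = \0 :> (V -> W).
  apply: diff_unique => //; exact: cst_continuous.
apply/diff_locallyP; rewrite d0; split; [exact: cst_continuous| exact: E].
Unshelve. all: by end_near. Qed.
End Loc.

Section Ck.
Context {R : realType} {s : nat}.
Local Notation V := 'rV[R]_s.

Lemma open_near {U : set V} {u} : open U -> U u -> \forall y \near u, U y.
Proof. by rewrite openE => oU Uu; exact: oU. Qed.

Lemma near_eq_differentiable {W : normedModType R} {f g : V -> W} {x} :
  (\forall y \near x, f y = g y) -> differentiable f x -> differentiable g x.
Proof.
move=> fg df.
have -> : g = f + (g - f) by apply/funext => y; rewrite !fctE addrC subrK.
apply: differentiableD => //; apply: near0_differentiable.
by apply: filterS fg => y; rewrite !fctE => ->; rewrite subrr.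
Qed.

Lemma Ck_ext (W : normedModType R) k (U : set V) (f g : V -> W) :
  open U -> (forall u, U u -> f u = g u) -> Ck_on k U f -> Ck_on k U g.
Proof.
move=> oU; elim: k f g => [|k IH] f g fg /=.
  move=> Cf u Uu; rewrite /prop_for /continuous_at -(fg u Uu).
  apply: cvg_trans (Cf u Uu); apply: (@near_eq_cvg _ _ (nbhs u) _ f g).
  exact: (filterS (fun y => @fg y) (open_near oU Uu)).
move=> [df dD]; split.
  move=> u Uu; apply: (near_eq_differentiable _ (df u Uu)).
  by apply: filterS (open_near oU Uu) => y /fg.
move=> i; apply: (IH _ _ _ (dD i)) => u Uu.
apply: near_eq_derive; by apply: filterS (open_near oU Uu) => y /fg.
Qed.

Lemma Ck_down (W : normedModType R) k (U : set V) (f : V -> W) :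
  Ck_on k.+1 U f -> Ck_on k U f.
Proof.
elim: k f => [|k IH] f /= [df dD].
  by move=> u Uu; apply: differentiable_continuous; exact: df.
by split => // i; apply: IH; exact: dD.
Qed.

Lemma Ck_cst (W : normedModType R) k (U : set V) (a : W) :
  Ck_on k U (fun _ => a).
Proof.
elim: k a => [|k IH] a /=.
  by move=> u _; exact: cst_continuous.
split; first by move=> u _; exact: differentiable_cst.
move=> i; have -> : 'D_(delta_mx 0 i : V) (fun=> a) = fun _ => (0 : W).
  by apply: funext => y; exact: derive_cst.
exact: IH.
Qed.

Lemma Ck_add (W : normedModType R) k (U : set V) (f g : V -> W) :
  open U -> Ck_on k U f -> Ck_on k U g -> Ck_on k U (f + g).
Proof.
move=> oU; elim: k f g => [|k IH] f g /=.
  by move=> cf cg u Uu; apply: continuousD; [exact: cf|exact: cg].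
move=> [df dDf] [dg dDg]; split.
  by move=> u Uu; apply: differentiableD; [exact: df|exact: dg].
move=> i; apply: (@Ck_ext _ _ _ ('D_(delta_mx 0 i) f + 'D_(delta_mx 0 i) g)) => //.
  move=> u Uu; rewrite deriveD //; apply: diff_derivable; by [apply: df|apply: dg].
exact: IH.
Qed.

Lemma Ck_opp (W : normedModType R) k (U : set V) (f : V -> W) :
  open U -> Ck_on k U f -> Ck_on k U (- f).
Proof.
move=> oU; elim: k f => [|k IH] f /=.
  by move=> cf u Uu; apply: continuousN; exact: cf.
move=> [df dDf]; split.
  by move=> u Uu; apply: differentiableN; exact: df.
move=> i; apply: (@Ck_ext _ _ _ (- 'D_(delta_mx 0 i) f)) => //.
  move=> u Uu; rewrite deriveN //; apply: diff_derivable; by apply: df.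
exact: IH.
Qed.


Lemma Ck_mul k (U : set V) (f g : V -> R) :
  open U -> Ck_on k U f -> Ck_on k U g -> Ck_on k U (fun x => f x * g x).
Proof.
move=> oU; elim: k f g => [|k IH] f g /=.
  by move=> cf cg u Uu; apply: continuousM; [exact: cf|exact: cg].
move=> [df dDf] [dg dDg]; split.
  by move=> u Uu; apply: (@differentiableM _ _ f g); [exact: df|exact: dg].
move=> i.
apply: (@Ck_ext _ _ _ ((fun x => f x * 'D_(delta_mx 0 i) g x) +
                      (fun x => g x * 'D_(delta_mx 0 i) f x))) => //.
  move=> u Uu; rewrite (@deriveM _ _ f g) //; apply: diff_derivable;
    by [apply: df|apply: dg].
by apply: Ck_add => //; apply: IH => //; apply: Ck_down; split.
Qed.

Lemma Ck_lin (W W' : normedModType R) k (U : set V) (L : {linear W -> W'})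
  (f : V -> W) : open U -> continuous L -> Ck_on k U f -> Ck_on k U (L \o f).
Proof.
move=> oU cL; elim: k f => [|k IH] f /=.
  by move=> cf u Uu; apply: continuous_comp; [exact: cf|exact: cL].
move=> [df dDf]; split.
  move=> u Uu; apply: differentiable_comp; first exact: df.
  exact: linear_differentiable.
move=> i; apply: (@Ck_ext _ _ _ (L \o 'D_(delta_mx 0 i) f)) => //.
  move=> u Uu; have dfu := df u Uu.
  have dL : differentiable L (f u) by exact: linear_differentiable.
  have dLf : differentiable (L \o f) u by exact: differentiable_comp.
  by rewrite /= deriveE // [RHS]deriveE // (diff_comp dfu dL) /= (diff_lin _ cL).
exact: IH.
Qed.

Lemma Ck_inv k (U : set V) (g : V -> R) :
  open U -> (forall u, U u -> g u != 0) -> Ck_on k U g ->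
  Ck_on k U (fun x => (g x)^-1).
Proof.
move=> oU g0; elim: k => [|k IH] /=.
  by move=> cg u Uu; apply: continuousV; [exact: g0| exact: cg].
move=> Cg; have [dg dDg] := Cg; split.
  by move=> u Uu; apply: differentiableV; [exact: dg| exact: g0].
move=> i.
apply: (@Ck_ext _ _ _ (fun x => (- ((g x)^-1 * (g x)^-1)) * 'D_(delta_mx 0 i) g x)) => //.
  move=> u Uu; rewrite deriveV; [|exact: g0|by apply: diff_derivable; exact: dg].
  by rewrite -invfM -expr2.
have H := (@Ck_mul k U (fun x => - ((g x)^-1 * (g x)^-1)) ('D_(delta_mx 0 i) g) oU).
apply: H; last exact: dDg.
have := @Ck_opp _ k U (fun x => (g x)^-1 * (g x)^-1) oU.
apply.
have IH' := IH (@Ck_down _ _ _ _ Cg).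
exact: (@Ck_mul k U (fun x => (g x)^-1) (fun x => (g x)^-1)).
Qed.


Lemma Ck_coord {m} k (U : set V) (f : V -> 'rV[R]_m) (j : 'I_m) :
  open U -> Ck_on k U f -> Ck_on k U (fun u => f u 0 j).
Proof.
move=> oU Cf.
have @L : {linear 'rV[R]_m -> R}.
  by exists (fun N : 'rV[R]_m => N 0 j); do 2![eexists]; do ?[constructor];
     rewrite ?mxE// => ? *; rewrite ?mxE//; move=> ?; rewrite !mxE.
have cL : continuous L by exact: coord_continuous.
exact: (@Ck_lin _ _ k U L f oU cL Cf).
Qed.

Lemma Ck_scalev (W : normedModType R) k (U : set V) (g : V -> R) (x : W) :
  open U -> Ck_on k U g -> Ck_on k U (fun u => g u *: x).
Proof.
move=> oU Cg.
have sx_lin : linear ( *:%R ^~ x : R -> W).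
  by move=> u y z; rewrite scalerDl scalerA.
pose sxlM := GRing.isLinear.Build _ _ _ _ _ sx_lin.
pose sxL : {linear R -> W} := HB.pack ( *:%R ^~ x) sxlM.
have cL : continuous sxL by exact: scalel_continuous.
exact: (@Ck_lin _ _ k U sxL g oU cL Cg).
Qed.

Lemma Ck_bigsum (I : eqType) (r : seq I) (P : pred I) k (U : set V)
  (F : I -> V -> R) : open U -> (forall i, P i -> Ck_on k U (F i)) ->
  Ck_on k U (fun u => \sum_(i <- r | P i) F i u).
Proof.
move=> oU CF; elim: r => [|a r IH].
  have -> : (fun u => \sum_(i <- [::] | P i) F i u) = (fun _ => 0).
    by apply: funext => u; rewrite big_nil.
  exact: Ck_cst.
have -> : (fun u => \sum_(i <- a :: r | P i) F i u) =
  (fun u => (if P a then F a u else 0) + \sum_(i <- r | P i) F i u).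
  by apply: funext => u; rewrite big_cons; case: (P a); rewrite ?add0r.
apply: (@Ck_add _ k U (fun u => if P a then F a u else 0)) => //.
case Pa: (P a); [exact: CF | exact: Ck_cst].
Qed.

Lemma Ck_lprod {n} k (U : set V) (f : V -> 'rV[R]_n.+1) (v : 'rV[R]_n.+1) :
  open U -> Ck_on k U f -> Ck_on k U (fun u => lprod (f u) v).
Proof.
move=> oU Cf; rewrite /lprod.
apply: (@Ck_add _ k U (fun u => - (f u 0 0 * v 0 0))) => //.
  apply: (@Ck_opp _ k U (fun u => f u 0 0 * v 0 0)) => //.
  apply: (@Ck_mul k U (fun u => f u 0 0) (fun _ => v 0 0)) => //.
    exact: Ck_coord.
  exact: Ck_cst.
apply: Ck_bigsum => // i _.
apply: (@Ck_mul k U (fun u => f u 0 i) (fun _ => v 0 i)) => //.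
  exact: Ck_coord.
exact: Ck_cst.
Qed.


Lemma loc_const (U : set V) (phi : V -> R) : open U ->
  (forall u, U u -> differentiable phi u /\ forall z, 'd phi u z = 0) ->
  forall a, U a -> \forall b \near a, U b /\ phi b = phi a.
Proof.
move=> oU H a Ua.
move: (open_near oU Ua) => /nbhs_ballP [r r0 hr].
apply/nbhs_ballP; exists r => // b bab; split; first exact: hr.
pose d := b - a.
pose g := fun t : R => a + t *: d.
have gin (t : R) : 0 <= t <= 1 -> U (g t).
  move=> /andP [t0 t1]; apply: hr.
  move: bab; rewrite -!ball_normE /= /g /d => bab.
  rewrite opprD addrA subrr sub0r normrN normrZ ger0_norm //.
  rewrite (le_lt_trans _ bab) // -normrN opprB.
  by rewrite -[leRHS]mul1r ler_wpM2r.
have dg (t : R) : differentiable g t.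
  apply: differentiableD; first exact: differentiable_cst.
  apply: (@differentiableZl _ _ _ id); exact: ex_diff.
pose h := phi \o g.
have dh (t : R) : 0 <= t <= 1 -> differentiable h t /\ 'd h t 1 = 0.
  move=> /gin Ug; have [dp dp0] := H _ Ug.
  split; first exact: differentiable_comp.
  by rewrite diff_comp //= dp0.
have := @MVT_segment R h (fun _ => 0) 0 1 ler01.
case.
- move=> t; rewrite in_itv /= => /andP [t0 t1].
  have t01 : 0 <= t <= 1 by rewrite !ltW.
  have [dht dht0] := dh t t01.
  apply: DeriveDef; first exact: diff_derivable.
  by rewrite deriveE.
- apply: continuous_in_subspaceT => t.
  rewrite inE /= in_itv /= => t01.
  exact/differentiable_continuous/(dh t t01).1.
move=> c _; rewrite mul0r => /eqP; rewrite subr_eq0 => /eqP.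
by rewrite /h /g /= scale1r scale0r addr0 /d addrC subrK.
Qed.


Lemma conn_const (U : set V) (phi : V -> R) : open U -> connected U ->
  (forall u, U u -> differentiable phi u /\ forall z, 'd phi u z = 0) ->
  forall a b, U a -> U b -> phi b = phi a.
Proof.
move=> oU cU H a b Ua Ub.
pose B := [set x | U x /\ phi x = phi a].
have loc := @loc_const U phi oU H.
suff BU : B = U.
  have : B b by rewrite BU.
  by case.
apply: cU.
- by exists a.
- exists (B°); first exact: open_interior.
  apply/seteqP; split => x.
  + move=> Bx; split; first exact: Bx.1.
    have := loc x Bx.1; apply: filterS => y [Uy py]; split => //.
    by rewrite py Bx.2.
  + by move=> [Ux /interior_subset Bx].
- exists (closure B); first exact: closed_closure.
  apply/seteqP; split => x.
  + by move=> Bx; split; [exact: Bx.1| exact: subset_closure].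
  + move=> [Ux cx]; split => //.
    have [y [[Uy pya] [_ pyx]]] := cx _ (loc x Ux).
    by rewrite -pyx pya.
Qed.

End Ck.
Section Lprod.
Context {R : realType} {n : nat}.
Implicit Types x y z : 'rV[R]_n.+1.

Lemma lprodC x y : lprod x y = lprod y x.
Proof.
rewrite /lprod mulrC; congr (_ + _); apply: eq_bigr => i _; exact: mulrC.
Qed.

Lemma lprodDl x y z : lprod (x + y) z = lprod x z + lprod y z.
Proof.
rewrite /lprod !mxE.
have -> : \sum_(i < n.+1 | i != ord0) (x + y) 0 i * z 0 i =
  \sum_(i < n.+1 | i != ord0) x 0 i * z 0 i + \sum_(i < n.+1 | i != ord0) y 0 i * z 0 i.
  by rewrite -big_split /=; apply: eq_bigr => i _; rewrite mxE mulrDl.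
ring.
Qed.

Lemma lprodZl a x z : lprod (a *: x) z = a * lprod x z.
Proof.
rewrite /lprod !mxE mulrDr mulr_sumr; congr (_ + _); first ring.
by apply: eq_bigr => i _; rewrite mxE mulrA.
Qed.

Lemma lprodNl x z : lprod (- x) z = - lprod x z.
Proof. by rewrite -scaleN1r lprodZl mulN1r. Qed.

Lemma lprodBl x y z : lprod (x - y) z = lprod x z - lprod y z.
Proof. by rewrite lprodDl lprodNl. Qed.

Lemma lprodDr x y z : lprod z (x + y) = lprod z x + lprod z y.
Proof. by rewrite !(lprodC z) lprodDl. Qed.
Lemma lprodZr a x z : lprod z (a *: x) = a * lprod z x.
Proof. by rewrite !(lprodC z) lprodZl. Qed.
Lemma lprodNr x z : lprod z (- x) = - lprod z x.
Proof. by rewrite !(lprodC z) lprodNl. Qed.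
Lemma lprodBr x y z : lprod z (x - y) = lprod z x - lprod z y.
Proof. by rewrite !(lprodC z) lprodBl. Qed.
Lemma lprod0l z : lprod 0 z = 0.
Proof. by rewrite -(scale0r 0) lprodZl mul0r. Qed.

Lemma lightlike_x0 x : lprod x x = 0 -> x 0 ord0 = 0 -> x = 0.
Proof.
rewrite /lprod => h0 x0; rewrite x0 mul0r oppr0 add0r in h0.
have ge : forall i : 'I_n.+1, i != ord0 -> 0 <= x 0 i * x 0 i.
  by move=> i _; rewrite -expr2 sqr_ge0.
have hz := psumr_eq0P ge h0.
apply/rowP => i; rewrite mxE.
have [->|ne] := eqVneq i ord0; first exact: x0.
by have /eqP := hz i ne; rewrite mulf_eq0 orbb => /eqP.
Qed.

Lemma tl_neg x y : lprod x x = -1 -> 0 < x 0 ord0 -> lprod y y = 0 ->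
  y 0 ord0 = 1 -> lprod x y < 0.
Proof.
rewrite /lprod => hx a0 hy y0; rewrite y0 in hy *.
set a := x 0 ord0 in hx a0 *.
set Sx := \sum_(i < n.+1 | i != ord0) x 0 i * x 0 i in hx.
set Sy := \sum_(i < n.+1 | i != ord0) y 0 i * y 0 i in hy.
set S := \sum_(i < n.+1 | i != ord0) x 0 i * y 0 i.
have E : \sum_(i < n.+1 | i != ord0) (x 0 i - a * y 0 i) * (x 0 i - a * y 0 i)
   = Sx - 2 * a * S + a * a * Sy.
  rewrite /Sx /S /Sy !mulr_sumr -sumrB -big_split /=.
  by apply: eq_bigr => i _; ring.
have : 0 <= \sum_(i < n.+1 | i != ord0) (x 0 i - a * y 0 i) * (x 0 i - a * y 0 i).
  by apply: sumr_ge0 => i _; rewrite -expr2 sqr_ge0.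
rewrite E => H.
have hSy : Sy = 1 by lra.
have hSx : Sx = a * a - 1 by lra.
rewrite hSy hSx in H.
nra.
Qed.

End Lprod.

Section Main.
Context {R : realType}.

Lemma lprod_comp_diff {s n} (X : 'rV[R]_s -> 'rV[R]_n.+1) (w : 'rV[R]_n.+1) u :
  differentiable X u ->
  differentiable (fun x => lprod (X x) w) u /\
  forall z, 'd (fun x => lprod (X x) w) u z = lprod ('d X u z) w.
Proof.
move=> dX.
have lin : linear (fun x : 'rV[R]_n.+1 => lprod x w : R).
  by move=> a x y; rewrite lprodDl lprodZl.
pose LM := GRing.isLinear.Build _ _ _ _ _ lin.
pose L : {linear 'rV[R]_n.+1 -> R} := HB.pack (fun x : 'rV[R]_n.+1 => lprod x w : R) LM.
have cL : continuous L.
  move=> x.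
  have Cid : Ck_on 0 (@setT 'rV[R]_n.+1) id by move=> y _; exact: cvg_id.
  exact: (@Ck_lprod R n.+1 n 0 setT id w openT Cid x I).
have dL : differentiable L (X u) by exact: linear_differentiable.
have -> : (fun x => lprod (X x) w) = L \o X by [].
split; first exact: differentiable_comp.
by move=> z; rewrite (diff_comp dX dL) /= (diff_lin _ cL).
Qed.

Section Geo.
Context {s n : nat} (X : 'rV[R]_s -> 'rV[R]_n.+1) (u : 'rV[R]_s).

Lemma normalD {y1 y2} : normal_space X u y1 -> normal_space X u y2 ->
  normal_space X u (y1 + y2).
Proof. by move=> h1 h2 t tt; rewrite lprodDl h1 // h2 // addr0. Qed.

Lemma normalZ a {y} : normal_space X u y -> normal_space X u (a *: y).
Proof. by move=> h t tt; rewrite lprodZl h // mulr0. Qed.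

Lemma normalN {y} : normal_space X u y -> normal_space X u (- y).
Proof. by move=> h t tt; rewrite lprodNl h // oppr0. Qed.

Lemma tangent0 : tangent_space X u 0.
Proof. by exists 0; rewrite linear0. Qed.

Lemma tproj_normal y :
  (forall t, tangent_space X u t -> t != 0 -> 0 < lprod t t) ->
  normal_space X u y -> tangent_proj X u y = 0.
Proof.
move=> sp ny; rewrite /tangent_proj; apply: xget_unique.
  by split; [exact: tangent0| rewrite subr0].
move=> t [tt nyt]; apply/eqP; apply: contraT => t0.
have nt : normal_space X u t.
  by have := normalD ny (normalN nyt); rewrite opprB addrC subrK.
by have := sp t tt t0; rewrite (nt t tt) ltxx.
Qed.

End Geo.

Lemma d_near_const {s} (W : normedModType R) (phi : 'rV[R]_s -> W) u (c : W) z :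
  differentiable phi u -> (\forall x \near u, phi x = c) -> 'd phi u z = 0.
Proof.
move=> dp nc; rewrite -deriveE //.
rewrite (@near_eq_derive _ _ _ phi (cst c)) ?derive_cst //.
Qed.

End Main.

Theorem proposition3p4 (R : realType) (s n : nat) (U : set 'rV[R]_s)
    (X : 'rV[R]_s -> 'rV[R]_(n.+1)) (nT : 'rV[R]_s -> 'rV[R]_(n.+1)) :
  open U -> connected U -> U !=set0 ->
  spacelike_embedding U X ->
  future_unit_timelike_normal U X nT ->
  ((exists nS, unit_spacelike_normal_orth U X nT nS /\
      exists w, forall u, U u -> nLG nT nS u = w)
   <->
   (exists v c, lightcone_sphere v /\ X @` U `<=` HP v c))
  /\
  (forall nS, unit_spacelike_normal_orth U X nT nS ->
     (exists w, forall u, U u -> nLG nT nS u = w) ->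
     forall u, U u -> forall xi, tangent_space X u xi ->
       lc_shape_operator X nT nS u xi = 0).
Proof.
move=> oU cU [u0 Uu0] [sX _ _ spX] [snT hnT].
have dX u : U u -> differentiable X u by move=> Uu; exact: ((sX 1%N).1 u Uu).
have dnT u : U u -> differentiable nT u by move=> Uu; exact: ((snT 1%N).1 u Uu).
have key : forall nS, unit_spacelike_normal_orth U X nT nS ->
    forall w, (forall u, U u -> nLG nT nS u = w) ->
    [/\ forall u, U u -> (nT u + nS u) 0 ord0 != 0,
        forall u, U u -> nT u + nS u = (nT u + nS u) 0 ord0 *: w,
        forall u, U u -> normal_space X u w &
        lightcone_sphere w].
  move=> nS [snS hnS] w hw.
  have hN u : U u -> lprod (nT u + nS u) (nT u + nS u) = 0.
    move=> Uu; have [_ nn nst] := hnS u Uu; have [_ tt _] := hnT u Uu.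
    by rewrite !(lprodDl, lprodDr) nn tt nst (lprodC (nT u)) nst; lra.
  have hN0 u : U u -> (nT u + nS u) 0 ord0 != 0.
    move=> Uu; apply/eqP => h0.
    have := lightlike_x0 _ (hN u Uu) h0 => /eqP; rewrite addr_eq0 => /eqP hS.
    have [_ nn _] := hnS u Uu; have [_ tt _] := hnT u Uu.
    by move: tt; rewrite hS lprodNl lprodNr opprK nn; lra.
  have hNw u : U u -> nT u + nS u = (nT u + nS u) 0 ord0 *: w.
    move=> Uu; rewrite -(hw u Uu) /nLG /normalize_lc scalerA mulfV ?scale1r //.
    exact: hN0.
  split => //.
  - move=> u Uu; rewrite -(hw u Uu) /nLG /normalize_lc; apply: normalZ.
    have [nT1 _ _] := hnT u Uu; have [nS1 _ _] := hnS u Uu.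
    exact: normalD.
  - split.
      rewrite -(hw u0 Uu0) /nLG /normalize_lc lprodZl lprodZr (hN u0 Uu0).
      by rewrite !mulr0.
    by rewrite -(hw u0 Uu0) /nLG /normalize_lc mxE mulVf //; exact: hN0.
split; [split|].
- move=> [nS [hS [w hw]]].
  have [h0 hNw nw [ww w0]] := key nS hS w hw.
  exists w, (lprod (X u0) w); split; first by split.
  move=> _ [u Uu <-]; rewrite /HP /=.
  apply: (@conn_const R s U (fun x => lprod (X x) w) oU cU _ u0 u Uu0 Uu).
  move=> x Ux; have [dp dp0] := lprod_comp_diff X w x (dX x Ux); split => // z.
  rewrite dp0 lprodC; apply: (nw x Ux); by exists z.
- move=> [v [c [[vv v0] hXU]]].
  have hvn u : U u -> normal_space X u v.
    move=> Uu t [z ->]; rewrite lprodC.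
    have [dp dp0] := lprod_comp_diff X v u (dX u Uu).
    rewrite -dp0; apply: (@d_near_const _ _ _ _ u c) => //.
    by apply: filterS (open_near oU Uu) => x Ux; apply: hXU; exists x.
  have lam u : U u -> lprod (nT u) v < 0.
    by move=> Uu; have [_ tt t0] := hnT u Uu; exact: tl_neg.
  pose nS := fun u => (- lprod (nT u) v)^-1 *: v - nT u.
  exists nS; split; last first.
    exists v => u Uu; rewrite /nLG /normalize_lc /nS addrC subrK mxE v0 mulr1.
    rewrite scalerA mulVf ?scale1r // invr_eq0 oppr_eq0; exact: ltr0_neq0 (lam u Uu).
  split.
    move=> k.
    have C1 : Ck_on k U (fun u => - lprod (nT u) v).
      exact: (@Ck_opp _ _ _ k U (fun u => lprod (nT u) v) oU (Ck_lprod k U nT v oU (snT k))).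
    have C2 : Ck_on k U (fun u => (- lprod (nT u) v)^-1).
      apply: (@Ck_inv _ _ k U (fun u => - lprod (nT u) v) oU) => // u Uu.
      by rewrite oppr_eq0; exact: ltr0_neq0 (lam u Uu).
    have C3 := @Ck_scalev _ _ _ k U _ v oU C2.
    have C4 := @Ck_opp _ _ _ k U nT oU (snT k).
    exact: (@Ck_add _ _ _ k U _ _ oU C3 C4).
  move=> u Uu; have [nT1 tt _] := hnT u Uu.
  have a0 : lprod (nT u) v != 0 by exact: ltr0_neq0 (lam u Uu).
  split.
  - by apply: normalD; [apply: normalZ; exact: hvn|exact: normalN].
  - rewrite /nS !(lprodBl, lprodBr, lprodZl, lprodZr) vv tt (lprodC v).
    by field; exact: a0.
  - rewrite /nS !(lprodBl, lprodZl) tt (lprodC v).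
    by field; exact: a0.
- move=> nS hS [w hw] u Uu xi _.
  have [h0 hNw nw _] := key nS hS w hw.
  have [snS _] := hS.
  have dnS : differentiable nS u by exact: ((snS 1%N).1 u Uu).
  rewrite /lc_shape_operator; set z := dX_inv X u xi.
  apply/eqP; rewrite oppr_eq0; apply/eqP.
  apply: tproj_normal; first exact: spX u Uu.
  pose c := fun x => (nT \+ nS) x 0 ord0.
  have dF : differentiable (nT \+ nS) u by apply: differentiableD; [exact: dnT|exact: dnS].
  have dc : differentiable c u.
    have -> : c = (fun N : 'rV[R]_n.+1 => N 0 ord0) \o (nT \+ nS) by [].
    apply: differentiable_comp => //; exact: differentiable_coord.
  have E : 'd (nT \+ nS) u z = 'd c u z *: w.
    rewrite -deriveE // (@near_eq_derive _ _ _ (nT \+ nS) (fun x => c x *: w)).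
      by rewrite deriveE ?diffZl //; exact: differentiableZl.
    by apply: filterS (open_near oU Uu) => x Ux; exact: hNw x Ux.
  by rewrite E; apply: normalZ; exact: nw.
Qed.
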